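(* For $n\ge 0$ let $\Theta_n=\{\theta\in\mathcal{I}_n\cap\mathcal{L}: |\theta|\text{ is minimal}\}$. Then $\Theta_n=\{f^{(n)}\}$ if $n$ is odd, and $\Theta_n=\{f^{(n)},\,f^{(n)}+g^{(n)}\}$ if $n$ is even.
   Context: $\mathbb{F}=\mathrm{GF}(2)$, $R=\mathbb{F}[x,z]$, $|\cdot|$ is total degree. $M=\mathbb{F}[x^{-1},z^{-1}]$ is an $R$-module via $x^pz^q\circ x^{-u}z^{-v}=x^{p-u}z^{q-v}$ if $p\le u,q\le v$ and $0$ otherwise, extended bilinearly; $\mathcal{I}_F=\{\varphi\in R:\varphi\circ F=0\}$. $\mathcal{L}$ is the set of non-zero forms $\varphi\in R$ whose coefficient of $x^{|\varphi|}$ equals $1$. Let $(r_0,r_1,\ldots)$ be the binary sequence with $r_i=1$ if $i=2^j-1$ for some $j\ge 0$ and $r_i=0$ otherwise. For $n\ge0$, $R^{(-n)}=\sum_{j=-n}^{0}r_{-j}\,x^{j}z^{-n-j}$ and $\mathcal{I}_n=\mathcal{I}_{R^{(-n)}}$. For a form $f\in R$ and homogeneous $G\in M$, $\Delta(f;G)$ is the coefficient of $x^{|f|+|G|}z^0$ in $f\cdot G$ computed in $\mathbb{F}[x^{\pm1},z^{\pm1}]$ if $|f|+|G|\le 0$, and $0$ otherwise. Define forms recursively: $(f^{(0)},g^{(0)})=(x+z,z)$; for $k\ge0$ let $d_k=|g^{(k)}|-|f^{(k)}|$ and $\Delta_k=\Delta(f^{(k)};R^{(-1-k)})$, and set $(f^{(k+1)},g^{(k+1)})=(f^{(k)},zg^{(k)})$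 if $\Delta_k=0$; $=(f^{(k)}+x^{-d_k}g^{(k)},\,zg^{(k)})$ if $\Delta_k=1$ and $d_k\le0$; $=(x^{d_k}f^{(k)}+g^{(k)},\,zf^{(k)})$ if $\Delta_k=1$ and $d_k>0$. *)

(* Defs.v *)
From HB Require Import structures.
From mathcomp Require Import all_boot all_order all_algebra.
From mathcomp Require Import mpoly.

Set Implicit Arguments.
Unset Strict Implicit.
Unset Printing Implicit Defensive.

Import Order.TTheory GRing.Theory Num.Theory.
Local Open Scope ring_scope.

Notation F2 := ('F_2).
Notation R := {mpoly F2[2]}.
Definition x : R := 'X_0.
Definition z : R := 'X_1.

Definition mono2 (a b : nat) : 'X_{1..2} := [multinom [tuple a; b]].
Definition ex (m : 'X_{1..2}) : nat := tnth (multinom_val m) ord0.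
Definition ez (m : 'X_{1..2}) : nat := tnth (multinom_val m) (lift ord0 ord0).

Definition is_form (p : R) : bool := p \is homog mdeg.
Definition tdeg (p : R) : nat := (msize p).-1.

(* M = F[x^-1, z^-1].  An element of M is represented by an mpoly G in two
   variables: the monomial m of G stands for x^{-(ex m)} z^{-(ez m)}.
   Total degree of a homogeneous nonzero G is then -(tdegM G). *)
Notation M := {mpoly F2[2]}.
Definition tdegM (G : M) : nat := (msize G).-1.

(* The R-module action: x^p z^q o x^-u z^-v = x^(p-u) z^(q-v) if p<=u, q<=v,
   and 0 otherwise, extended bilinearly. *)
Definition contract (phi : R) (G : M) : M :=
  \sum_(p <- msupp phi) \sum_(u <- msupp G | (p <= u)%MM)
     (phi@_p * G@_u) *: 'X_[u - p].

Definition annihilator (G : M) : pred R := fun phi => contract phi G == 0.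

Definition inL (phi : R) : bool :=
  [&& phi != 0, is_form phi & phi@_(mono2 (tdeg phi) 0) == 1].

(* r_i = 1 iff i = 2^j - 1 for some j >= 0 (such a j is necessarily <= i). *)
Definition r (i : nat) : F2 :=
  if [exists j : 'I_i.+1, i == (2 ^ j).-1]%N then 1 else 0.

(* R^(-n) = sum_{j=-n}^0 r_{-j} x^j z^{-n-j} = sum_{i=0}^n r_i x^-i z^-(n-i). *)
Definition Rn (n : nat) : M := \sum_(i < n.+1) r i *: 'X_[mono2 i (n - i)].

Definition In (n : nat) : pred R := annihilator (Rn n).

(* Delta(f;G): coefficient of x^{|f|+|G|} z^0 in the Laurent product f*G
   (|G| = - tdegM G) if |f| + |G| <= 0, and 0 otherwise.  The monomial
   x^p0 z^p1 * x^-u0 z^-u1 equals x^{|f|+|G|} z^0 iff p1 = u1 and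
   p0 - u0 = |f| - tdegM G. *)
Definition Delta (f : R) (G : M) : F2 :=
  if (tdeg f <= tdegM G)%N then
    \sum_(p <- msupp f) \sum_(u <- msupp G |
        (ez p == ez u) && ((ex p)%:Z - (ex u)%:Z == (tdeg f)%:Z - (tdegM G)%:Z))
      f@_p * G@_u
  else 0.

Fixpoint fg (k : nat) : R * R :=
  match k with
  | 0 => (x + z, z)
  | k'.+1 =>
      let f := (fg k').1 in
      let g := (fg k').2 in
      let d : int := (tdeg g)%:Z - (tdeg f)%:Z in
      if Delta f (Rn k'.+1) == 0 then (f, z * g)
      else if d <= 0 then (f + x ^+ `|d|%N * g, z * g)
      else (x ^+ `|d|%N * f + g, z * f)
  end.

Definition fk (k : nat) : R := (fg k).1.
Definition gk (k : nat) : R := (fg k).2.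

Definition inTheta (n : nat) (theta : R) : Prop :=
  [/\ theta \in In n, inL theta &
      forall theta' : R, theta' \in In n -> inL theta' ->
        (tdeg theta <= tdeg theta')%N].

(* Main.v *)
Require Import Defs.
From HB Require Import structures.
From mathcomp Require Import all_boot all_order all_algebra.
From mathcomp Require Import mpoly.
From mathcomp Require Import zify ring.
Set Implicit Arguments. Unset Strict Implicit. Unset Printing Implicit Defensive.
Import Order.TTheory GRing.Theory Num.Theory.
Local Open Scope ring_scope.

Notation P2 := {poly 'F_2}.

Lemma F2_cases (c : 'F_2) : c = 0 \/ c = 1.
Proof.
have H : (val c < 2)%N by case: c.
case: c H => -[|[|i]] Hi //= _; [left|right]; exact/val_inj.
Qed.

Lemma F2_add (c : 'F_2) : c + c = 0.
Proof.
by case: (F2_cases c) => ->; [rewrite addr0|exact: (pchar_Fp_0 (isT : prime 2))].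
Qed.

Lemma P2_add (p : P2) : p + p = 0.
Proof. by apply/polyP => i; rewrite coefD F2_add coef0. Qed.

Lemma two0 : (2%:R : P2) = 0.
Proof. by rewrite -[2%N]/(1+1)%N natrD P2_add. Qed.

Lemma P2_opp (p : P2) : - p = p.
Proof. by rewrite -[LHS]addr0 -(P2_add p) addrA addNr add0r. Qed.

Lemma rP i : reflect (exists j, i = (2 ^ j).-1)%N
  [exists j : 'I_i.+1, i == (2 ^ j).-1]%N.
Proof.
apply: (iffP existsP) => [[j /eqP ->]|[j ->]]; first by exists j.
have hj : (j < ((2 ^ j).-1).+1)%N.
  have := ltn_expl j (isT : (1 < 2)%N); have := expn_gt0 2 j; lia.
by exists (Ordinal hj).
Qed.

Lemma r0 : r 0 = 1.
Proof. by rewrite /r; case: rP => // -[]; exists 0%N. Qed.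

Lemma r_odd i : r (i.*2.+1) = r i.
Proof.
rewrite /r; case: rP => [[j Hj]|Hn]; case: rP => [[j' Hj']|Hn'] //.
- exfalso; apply: Hn'; case: j Hj => [|j]; first by rewrite expn0.
  rewrite expnS => Hj; exists j; have := expn_gt0 2 j; lia.
- exfalso; apply: Hn; exists j'.+1; rewrite expnS; have := expn_gt0 2 j'; lia.
Qed.

Lemma r_even i : r (i.*2.+2) = 0.
Proof.
rewrite /r; case: rP => // -[[|j]]; first by rewrite expn0.
rewrite expnS => Hj; exfalso.
have := expn_gt0 2 j; case: j Hj => [|j]; first by rewrite expn0; lia.
rewrite expnS; lia.
Qed.

Lemma r_sq i : r i * r i = r i.
Proof. by rewrite /r; case: ifP; rewrite ?mulr1 ?mulr0. Qed.

Definition rho (N : nat) : P2 := \poly_(i < N) r i.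

Lemma coef_rho N i : (rho N)`_i = if (i < N)%N then r i else 0.
Proof. by rewrite coef_poly. Qed.

Definition Sx (N : nat) : P2 := \sum_(i < N) r i *: 'X^(i.*2.+1).

Lemma rho_S N : rho N.+1 = rho N + r N *: 'X^N.
Proof. by rewrite /rho !poly_def big_ord_recr. Qed.

Lemma Sx_sq N : 'X * rho N ^+ 2 = Sx N.
Proof.
elim: N => [|N IH]; first by rewrite /rho /Sx poly_def !big_ord0 expr0n mulr0.
rewrite rho_S /Sx big_ord_recr -/(Sx N) -IH /=.
have -> : (rho N + r N *: 'X^N) ^+ 2 = rho N ^+ 2 + (r N *: 'X^N) ^+ 2
   + 2%:R * (rho N * (r N *: 'X^N)) by ring.
rewrite two0 mul0r addr0 mulrDr; congr (_ + _).
rewrite expr2 -scalerAl -!scalerAr scalerA r_sq; congr (_ *: _).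
by rewrite -exprD -exprS; congr ('X^_); lia.
Qed.

Lemma rho_double N : (0 < N)%N -> rho N.*2 = 1 + 'X * rho N ^+ 2.
Proof.
rewrite Sx_sq; elim: N => // -[|N] IH _.
  rewrite /rho /Sx poly_def !big_ord_recr !big_ord0 /= !add0r r0.
  by rewrite (r_odd 0) r0 !scale1r expr0.
rewrite [X in rho X = _](_ : _ = (N.+1).*2.+2) // rho_S rho_S IH // /Sx [in RHS]big_ord_recr -/(Sx N.+1) /=.
rewrite r_even r_odd scale0r addr0 addrA; congr (_ + _ *: 'X^_); lia.
Qed.

Definition cong (N : nat) (p q : P2) := 'X^N %| p - q.

Lemma dvdXnP N (p : P2) : ('X^N %| p) <-> (forall i, (i < N)%N -> p`_i = 0).
Proof.
split.
  move/dvdpP => [u ->] i Hi; by rewrite coefMXn Hi.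
move=> H; rewrite -(poly_take_drop N p).
have -> : take_poly N p = 0.
  by apply/polyP => i; rewrite coef_take_poly coef0; case: ifP => // /H.
by rewrite add0r dvdp_mull.
Qed.

Lemma congP N p q : cong N p q <-> (forall i, (i < N)%N -> p`_i = q`_i).
Proof.
rewrite /cong dvdXnP; split=> H i Hi; first by apply/eqP; rewrite -subr_eq0 -coefB H.
by rewrite coefB H // subrr.
Qed.

Lemma rho_cong M M' : (M <= M')%N -> cong M (rho M') (rho M).
Proof.
move=> H; apply/congP => i Hi; rewrite !coef_rho Hi.
by have -> : (i < M')%N by lia.
Qed.

Lemma cong_rec N : 'X^N %| rho N - (1 + 'X * rho N ^+ 2).
Proof.
case: N => [|N]; first by rewrite expr0 dvd1p.
rewrite -rho_double //.
have H : (N.+1 <= N.+1.*2)%N by lia.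
have := rho_cong H.
by rewrite -dvdpNr opprB.
Qed.

Fixpoint Fs (k : nat) : P2 :=
  match k with
  | 0 => 1
  | 1 => 1 + 'X
  | (k'.+1 as k1).+1 => Fs k1 + 'X^2 * Fs k'
  end.
Fixpoint Ps (k : nat) : P2 :=
  match k with
  | 0 => 0
  | 1 => 1
  | (k'.+1 as k1).+1 => Ps k1 + 'X^2 * Ps k'
  end.

Lemma FsSS k : Fs k.+2 = Fs k.+1 + 'X^2 * Fs k. Proof. by []. Qed.
Lemma PsSS k : Ps k.+2 = Ps k.+1 + 'X^2 * Ps k. Proof. by []. Qed.

Lemma FE M j : 'X^M %| Fs j * rho M - (Ps j + 'X^(j.*2) * rho M ^+ (j.*2.+1)).
Proof.
set p := rho M.
have He := cong_rec M; rewrite -/p in He.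
set e := p - (1 + 'X * p ^+ 2) in He.
elim/ltn_ind: j => -[|[|j]] IH.
- by rewrite /= ?(mul1r, add0r, expr0, expr1) subrr dvdp0.
- have -> : Fs 1 * p - (Ps 1 + 'X^(1.*2) * p ^+ (1.*2.+1))
      = e * (1 + 'X * p) + 2%:R * ('X * p) by rewrite /e /=; ring.
  by rewrite two0 mul0r addr0 dvdp_mulr.
- have H1 := IH j.+1 (ltnSn _); have H0 := IH j (ltnW (ltnSn _)).
  set A : P2 := 'X^(j.*2.+2); set B := p ^+ (j.*2.+1).
  have EA : 'X^((j.+2).*2) = A * 'X^2 by rewrite /A -exprD; congr ('X^_); lia.
  have EA1 : 'X^((j.+1).*2) = A by [].
  have EB : p ^+ ((j.+2).*2.+1) = B * p ^+ 4 by rewrite /B -exprD; congr (_ ^+ _); lia.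
  have EB1 : p ^+ ((j.+1).*2.+1) = B * p ^+ 2 by rewrite /B -exprD; congr (_ ^+ _); lia.
  have EA0 : 'X^(j.*2) * 'X^2 = A by rewrite /A -exprD; congr ('X^_); lia.
  rewrite FsSS PsSS EA EB.
  set D1 := Fs j.+1 * p - (Ps j.+1 + 'X^((j.+1).*2) * p ^+ ((j.+1).*2.+1)) in H1.
  set D0 := Fs j * p - (Ps j + 'X^(j.*2) * p ^+ (j.*2.+1)) in H0.
  have -> : (Fs j.+1 + 'X^2 * Fs j) * p - (Ps j.+1 + 'X^2 * Ps j + A * 'X^2 * (B * p ^+ 4))
     = D1 + 'X^2 * D0 + A * B * (e * (p - 1 + 'X * p ^+ 2)) + A * B * (2%:R * p).
    rewrite /D1 /D0 /e EA1 EB1 -EA0 /B; ring.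
  rewrite two0 mul0r mulr0 addr0.
  apply: dvdp_add; [apply: dvdp_add => //|]; apply: dvdp_mull => //.
  exact: dvdp_mulr.
Qed.

Lemma det j : Fs j.+1 * Ps j + Fs j * Ps j.+1 = 'X^(j.*2).
Proof.
elim: j => [|j IH]; first by rewrite /= mulr0 add0r mulr1 expr0.
rewrite FsSS PsSS.
have -> : (Fs j.+1 + 'X^2 * Fs j) * Ps j.+1 + Fs j.+1 * (Ps j.+1 + 'X^2 * Ps j)
   = 'X^2 * (Fs j.+1 * Ps j + Fs j * Ps j.+1) + 2%:R * (Fs j.+1 * Ps j.+1) by ring.
by rewrite two0 mul0r addr0 IH -exprD; congr ('X^_); lia.
Qed.

Lemma Fs_props j : [/\ (size (Fs j) <= j.+1)%N, (Fs j)`_j = 1, (Fs j)`_0 = 1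
   & (size (Ps j) <= j)%N].
Proof.
elim/ltn_ind: j => -[|[|j]] IH.
- by rewrite /= size_poly1 size_poly0 coefC.
- rewrite /= coefD coefX coefC /= add0r coefD coefX coefC /= addr0; split => //.
    by rewrite (leq_trans (size_polyD _ _)) // size_polyX size_poly1.
  by rewrite size_poly1.
- have [s1 t1 z1 p1] := IH j.+1 (ltnSn _).
  have [s0 t0 z0 p0] := IH j (ltnW (ltnSn _)).
  rewrite FsSS PsSS; split.
  + apply/leq_sizeP => i Hi; rewrite coefD coefXnM.
    have -> : (Fs j.+1)`_i = 0 by apply: (leq_sizeP _ _ s1); lia.
    rewrite add0r; case: ifP => // _; apply: (leq_sizeP _ _ s0); lia.
  + rewrite coefD coefXnM /= (_ : (j.+2 - 2 = j)%N); last by lia.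
    by rewrite t0 (leq_sizeP _ _ s1) ?add0r.
  + by rewrite coefD coefXnM /= z1 addr0.
  + apply/leq_sizeP => i Hi; rewrite coefD coefXnM.
    have -> : (Ps j.+1)`_i = 0 by apply: (leq_sizeP _ _ p1); lia.
    rewrite add0r; case: ifP => // _; apply: (leq_sizeP _ _ p0); lia.
Qed.

Lemma size_Fs j : size (Fs j) = j.+1.
Proof.
have [s t _ _] := Fs_props j; apply/eqP; rewrite eqn_leq s /=.
by rewrite ltnNge; apply/negP => /leq_sizeP /(_ j (leqnn _)); rewrite t => /eqP; rewrite oner_eq0.
Qed.

Lemma dvdXn_mulF m j (a : P2) : 'X^m %| a * Fs j -> 'X^m %| a.
Proof.
rewrite Gauss_dvdpl // coprimep_expl // coprimep_sym.
have := coprimep_XsubC (Fs j) 0; rewrite polyC0 subr0 => ->.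
have [_ _ z _] := Fs_props j.
by rewrite /root horner_coef0 z oner_eq0.
Qed.

Lemma core k (C Q : P2) (c : 'F_2) :
  (size C <= k.+2)%N -> (size Q <= k.+1)%N -> C`_0 = 1 ->
  C * Ps k.+1 + Q * Fs k.+1 = c *: 'X^(k.*2.+1) ->
  C = Fs k.+1 + c *: ('X * Fs k).
Proof.
move=> sC sQ C0 Hb.
set F1 := Fs k.+1 in Hb *; set F0 := Fs k.
set al := C * Ps k + Q * F0.
have E : al * F1 = (C - c *: ('X * F0)) * 'X^(k.*2).
  have E1 : C * (F1 * Ps k + F0 * Ps k.+1)
     = al * F1 + (C * Ps k.+1 + Q * F1) * F0 - 2%:R * (Q * F0 * F1) by rewrite /al; ring.
  rewrite det two0 mul0r subr0 Hb in E1.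
  rewrite -mul_polyC -mul_polyC in E1 *.
  by rewrite mulrBl E1 exprS; ring.
have : 'X^(k.*2) %| al * F1 by rewrite E dvdp_mull.
move/dvdXn_mulF/dvdpP => [g Hg].
have XnZ : ('X^(k.*2) : P2) != 0 by rewrite expf_neq0 // polyX_eq0.
have E2 : g * F1 = C - c *: ('X * F0).
  by apply: (mulIf XnZ); rewrite -E Hg mulrAC.
set G := C - c *: ('X * F0) in E2.
have G0 : G`_0 = 1 by rewrite /G coefB coefZ coefXM /= mulr0 subr0.
have sG : (size G <= k.+2)%N.
  apply/leq_sizeP => i Hi; rewrite /G coefB coefZ coefXM.
  rewrite (leq_sizeP _ _ sC) //; case: ifP => _; first by rewrite mulr0 subr0.
  have [s0 _ _ _] := Fs_props k.
  by rewrite /F0 (leq_sizeP _ _ s0) ?mulr0 ?subr0 //; lia.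
have gnz : g != 0.
  by apply/eqP => g0; move: G0; rewrite -E2 g0 mul0r coef0 => /eqP; rewrite eq_sym oner_eq0.
have F1nz : F1 != 0 by rewrite -size_poly_eq0 /F1 size_Fs.
have sg : (size g <= 1)%N.
  move: sG; rewrite -E2 size_mul // /F1 size_Fs addnS /= => H; rewrite -(leq_add2r k.+1) (leq_trans H) // add1n.
have g1 : g = 1.
  rewrite (size1_polyC sg); move: G0; rewrite -E2 coef0M.
  have [_ _ z _] := Fs_props k.+1; rewrite -/F1 in z; rewrite z mulr1 => ->.
  by [].
by move: E2; rewrite g1 mul1r /G => ->; rewrite subrK.
Qed.

Definition lin (d : nat) (C : P2) (a : nat) : 'F_2 := \sum_(j < d.+1) C`_j * r (a - j).

Lemma lin_coef d (C : P2) a M : (size C <= d.+1)%N -> (d <= a)%N -> (a < M)%N ->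
  (C * rho M)`_a = lin d C a.
Proof.
move=> sC da aM; rewrite coefM /lin.
rewrite (big_ord_widen a.+1 (fun j => C`_j * r (a - j))) ?ltnS //.
rewrite [RHS]big_mkcond /=; apply: eq_bigr => -[j Hj] _ /=.
rewrite coef_rho (_ : (a - j < M)%N); last by lia.
case: ifP => // Hjd; rewrite (leq_sizeP _ _ sC) ?mul0r //; lia.
Qed.

Lemma linD d (C D : P2) a : lin d (C + D) a = lin d C a + lin d D a.
Proof. by rewrite /lin -big_split; apply: eq_bigr => j _; rewrite coefD mulrDl. Qed.

Lemma size_mul_le (p q : P2) a b : (size p <= a)%N -> (size q <= b)%N ->
  (size (p * q)%R <= (a + b).-1)%N.
Proof.
move=> Hp Hq; apply: (leq_trans (size_polyMleq p q)).
move: Hp Hq; clear; lia.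
Qed.

Lemma coef0X (q : P2) m : (q ^+ m)`_0 = q`_0 ^+ m.
Proof. by elim: m => [|m IH]; rewrite ?expr0 ?coefC // !exprS coef0M IH. Qed.

Lemma FE_coef M j a : (a < M)%N -> (size (Ps j) <= a)%N ->
  (Fs j * rho M)`_a = if (a < j.*2)%N then 0 else (rho M ^+ (j.*2.+1))`_(a - j.*2).
Proof.
move=> aM sP.
have /dvdXnP H := FE M j.
have := H a aM; rewrite coefB coefD (leq_sizeP _ _ sP) // add0r coefXnM.
by move/eqP; rewrite subr_eq0 => /eqP.
Qed.

Lemma lin_F k a : (k.+1 <= a <= k.*2.+2)%N ->
  lin k.+1 (Fs k.+1) a = (a == k.*2.+2)%:R.
Proof.
move=> /andP [h1 h2].
have [s _ _ sP] := Fs_props k.+1.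
rewrite -(@lin_coef _ _ _ a.+1) // FE_coef //; last by apply: leq_trans sP _.
case: ifP => Ha.
  by rewrite (_ : (a == _) = false) //; apply/negbTE; move: Ha h2; clear; lia.
have -> : a = k.*2.+2 by move: Ha h2; clear; lia.
by rewrite eqxx subnn coef0X coef_rho /= r0 expr1n.
Qed.

Lemma lin_XF k a : (k.+1 <= a <= k.*2)%N -> lin k.+1 ('X * Fs k) a = 0.
Proof.
move=> /andP [h1 h2].
have [s _ _ sP] := Fs_props k.
  have sX : (size (('X : P2) * Fs k)%R <= k.+2)%N.
  apply/leq_sizeP => i Hi; rewrite coefXM; case: ifP => // _.
  apply: (leq_sizeP _ _ s); move: Hi; clear; lia.
rewrite -(@lin_coef _ _ _ a.+1) // -mulrA coefXM.
case: a h1 h2 => // a h1 h2 /=.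
rewrite FE_coef //; last by apply: leq_trans sP _.
by case: ifP => //; move: h2; clear; lia.
Qed.

Lemma classify n d (C : P2) :
  (size C <= d.+1)%N -> C`_0 = 1 -> (d <= (n./2).+1)%N ->
  (forall a, (d <= a <= n)%N -> lin d C a = 0) ->
  d = (n./2).+1 /\ (C = Fs (n./2).+1 \/ (~~ odd n /\ C = Fs (n./2).+1 + 'X * Fs (n./2))).
Proof.
move=> sC C0 dk Hann.
set k := n./2 in dk *.
have Hn : (odd n + k.*2 = n)%N by rewrite odd_double_half.
have Hn1 : (k.*2 <= n)%N by rewrite -[X in (_ <= X)%N]Hn leq_addl.
have Hn2 : (n <= k.*2.+1)%N by rewrite -[X in (X <= _)%N]Hn; case: (odd n).
set M := n.+2; set p := rho M.
set W := C * p; set Q := take_poly d W.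
have HWQ : 'X^(n.+1) %| W - Q.
  apply/dvdXnP => i Hi; rewrite coefB coef_take_poly.
  case: ifP => Hid; first by rewrite subrr.
  rewrite subr0 /W /p (@lin_coef d) //; last by rewrite /M; lia.
    by apply: Hann; apply/andP; split; lia.
  by lia.
set F1 := Fs k.+1; set P1 := Ps k.+1.
have HD := FE M k.+1; rewrite -/p -/F1 -/P1 in HD.
set D := F1 * p - (P1 + 'X^(k.+1.*2) * p ^+ (k.+1.*2.+1)) in HD.
set be := C * P1 + Q * F1.
have Ebe : be = - (C * D) - 'X^(k.+1.*2) * (C * p ^+ (k.+1.*2.+1)) - (W - Q) * F1
                + 2%:R * (C * F1 * p).
  by rewrite /be /D /W; ring.
have Xle : forall m, (n.+1 <= m)%N -> 'X^(n.+1) %| ('X^m : P2).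
  by move=> m Hm; apply: dvdp_exp2l.
have Hbe : 'X^(n.+1) %| be.
  rewrite Ebe two0 mul0r addr0.
  apply: dvdp_sub; [apply: dvdp_sub|].
  - rewrite dvdpNr; apply: dvdp_mull; apply: dvdp_trans HD; apply: Xle; rewrite /M; lia.
  - apply: dvdp_mulr; apply: Xle; lia.
  - exact: dvdp_mulr.
have [s1 _ _ sP1] := Fs_props k.+1.
have sQ : (size Q <= d)%N by apply: size_take_poly.
have sbe : (size be <= k.*2.+2)%N.
  apply: (leq_trans (size_polyD _ _)); rewrite geq_max; apply/andP; split.
    by apply: (leq_trans (size_mul_le sC sP1)); lia.
  by apply: (leq_trans (size_mul_le sQ s1)); lia.
have [g Hg] := dvdpP _ _ Hbe.
have sg : (size g <= 1)%N.
  case: (eqVneq g 0) => [->|gnz]; first by rewrite size_poly0.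
  move: sbe Hn1; rewrite Hg size_mulXn //; set s := size g; clear; lia.
set c := g`_0.
have g0odd : odd n -> g = 0.
  move=> on; apply/eqP; rewrite -size_poly_eq0; apply/eqP.
  case: (eqVneq g 0) => [->|gnz]; first by rewrite size_poly0.
  have := gnz; rewrite -size_poly_gt0; move: sbe Hn.
  rewrite on Hg size_mulXn //; set s := size g; clear; lia.
have cod : odd n -> c = 0 by move=> /g0odd; rewrite /c => ->; rewrite coef0.
have Ebe2 : be = c *: 'X^(k.*2.+1).
  case on: (odd n).
    by rewrite Hg (g0odd on) cod // mul0r scale0r.
  rewrite Hg (size1_polyC sg) mul_polyC -/c; congr (_ *: 'X^_).
  by move: Hn; rewrite on add0n => <-.
have sC2 : (size C <= k.+2)%N by lia.
have sQ2 : (size Q <= k.+1)%N by lia.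
have EC := core sC2 sQ2 C0 Ebe2.
have dk1 : d = k.+1.
  apply/eqP; rewrite eqn_leq dk /= ltnNge; apply/negP => dlek.
  have : C`_k.+1 = 0 by apply: (leq_sizeP _ _ sC); lia.
  have [_ t1 _ _] := Fs_props k.+1.
  have [_ t0 _ _] := Fs_props k.
  rewrite EC coefD coefZ coefXM /= t1 t0 mulr1.
  case: (F2_cases c) => c1; first by rewrite c1 addr0 => /eqP; rewrite oner_eq0.
  move: Ebe2; rewrite c1 scale1r => Hb _.
  have : (size be <= k.*2.+1)%N.
    apply: (leq_trans (size_polyD _ _)); rewrite geq_max; apply/andP; split.
      by apply: (leq_trans (size_mul_le sC sP1)); lia.
    by apply: (leq_trans (size_mul_le sQ s1)); lia.
  by rewrite Hb size_polyXn ltnn.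
split => //.
case: (F2_cases c) => c1; first by left; rewrite EC c1 scale0r addr0.
right; split; last by rewrite EC c1 scale1r.
by apply/negP => /cod; rewrite c1 => /eqP; rewrite oner_eq0.
Qed.

Definition o1 : 'I_2 := lift ord0 ord0.

Lemma mono2E a b : (mono2 a b) ord0 = a /\ (mono2 a b) o1 = b.
Proof. by []. Qed.

Lemma I2_cases (i : 'I_2) : i = ord0 \/ i = o1.
Proof. by case: i => -[|[|]] Hi //; [left|right]; apply: val_inj. Qed.

Lemma mono2_ext (m : 'X_{1..2}) : m = mono2 (m ord0) (m o1).
Proof. by apply/mnmP => i; case: (I2_cases i) => ->. Qed.

Lemma mono2_inj a b a' b' : mono2 a b = mono2 a' b' -> a = a' /\ b = b'.
Proof.
move=> H; have := congr1 (fun m : 'X_{1..2} => m ord0) H.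
by have := congr1 (fun m : 'X_{1..2} => m o1) H.
Qed.

Lemma eq_mono2 a b a' b' : (mono2 a b == mono2 a' b') = (a == a') && (b == b').
Proof.
apply/eqP/andP => [/mono2_inj [-> ->]|[/eqP -> /eqP ->]] //.
Qed.

Lemma mdeg_mono2 a b : mdeg (mono2 a b) = (a + b)%N.
Proof. by rewrite mdegE big_ord_recr big_ord_recr big_ord0. Qed.

Lemma lem_mono2 a b a' b' : (mono2 a b <= mono2 a' b')%MM = (a <= a')%N && (b <= b')%N.
Proof.
apply/mnm_lepP/andP => [H|[H1 H2] i]; first by split; [exact: (H ord0)|exact: (H o1)].
by case: (I2_cases i) => ->.
Qed.

Lemma sub_mono2 a b a' b' : (mono2 a' b' - mono2 a b)%MM = mono2 (a' - a) (b' - b).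
Proof. by apply/mnmP => i; rewrite mnmBE; case: (I2_cases i) => ->. Qed.

Lemma add_mono2 a b a' b' : (mono2 a' b' + mono2 a b)%MM = mono2 (a' + a) (b' + b).
Proof. by apply/mnmP => i; rewrite mnmDE; case: (I2_cases i) => ->. Qed.

Lemma ex_mono2 a b : ex (mono2 a b) = a. Proof. by []. Qed.
Lemma ez_mono2 a b : ez (mono2 a b) = b. Proof. by []. Qed.

Lemma sum_msupp (p : R) K (mf : 'I_K -> 'X_{1..2}) (V : nmodType)
    (h : 'X_{1..2} -> V) :
  injective mf -> (forall m, p@_m != 0 -> exists j, m = mf j) ->
  (forall m, p@_m = 0 -> h m = 0) ->
  \sum_(m <- msupp p) h m = \sum_(j < K) h (mf j).
Proof.
move=> inj hsupp h0.
rewrite -(big_map mf xpredT h); symmetry.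
rewrite (eq_bigr (fun m => if m \in msupp p then h m else 0)); last first.
  move=> m _; case: ifP => // /negbT.
  by rewrite mcoeff_msupp negbK => /eqP /h0.
rewrite -big_mkcond -big_filter; apply: perm_big; apply: uniq_perm.
- by apply: filter_uniq; rewrite map_inj_uniq // index_enum_uniq.
- exact: msupp_uniq.
move=> m; rewrite mem_filter; apply/andP/idP => [[]//|Hm].
split => //; move: Hm; rewrite mcoeff_msupp => /hsupp [j ->].
by apply: map_f; rewrite mem_index_enum.
Qed.

Definition form (d : nat) (C : P2) : R :=
  \sum_(j < d.+1) C`_j *: 'X_[mono2 (d - j) j].

Lemma form_coef d C a b :
  (form d C)@_(mono2 a b) = if (a + b == d)%N then C`_b else 0.
Proof.
rewrite /form raddf_sum /=.
under eq_bigr => j _ do rewrite mcoeffZ mcoeffX eq_mono2.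
case: ifP => Hab.
  have Hb : (b < d.+1)%N by move/eqP: Hab; lia.
  rewrite (bigD1 (Ordinal Hb)) //= big1 ?addr0.
    rewrite (_ : ((d - b)%N == a) = true) ?eqxx ?mulr1 //; apply/eqP; move/eqP: Hab; lia.
  move=> j /eqP Hj; case: andP => [[_ /eqP Hjb]|]; last by rewrite mulr0.
  exfalso; apply: Hj; apply: val_inj => /=; lia.
apply: big1 => j _; case: andP => [[/eqP H1 /eqP H2]|]; last by rewrite mulr0.
exfalso; move/negbT: Hab => /eqP; apply.
have := ltn_ord j; lia.
Qed.

Lemma Rn_coef n a b :
  (Rn n)@_(mono2 a b) = if (a + b == n)%N then r a else 0.
Proof.
rewrite /Rn raddf_sum /=.
under eq_bigr => j _ do rewrite mcoeffZ mcoeffX eq_mono2.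
case: ifP => Hab.
  have Ha : (a < n.+1)%N by move/eqP: Hab; lia.
  rewrite (bigD1 (Ordinal Ha)) //= big1 ?addr0.
    rewrite eqxx (_ : ((n - a)%N == b) = true) ?mulr1 //; apply/eqP; move/eqP: Hab; lia.
  move=> j /eqP Hj; case: andP => [[/eqP Hja _]|]; last by rewrite mulr0.
  exfalso; apply: Hj; apply: val_inj => /=; lia.
apply: big1 => j _; case: andP => [[/eqP H1 /eqP H2]|]; last by rewrite mulr0.
exfalso; move/negbT: Hab => /eqP; apply.
have := ltn_ord j; lia.
Qed.

Lemma form_homog d (C : P2) : form d C \is d.-homog.
Proof.
rewrite /form; apply: rpred_sum => j _; apply: rpredZ.
rewrite dhomogX; change (mdeg (mono2 (d - j) j) == d).
by rewrite mdeg_mono2 subnK // -ltnS.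
Qed.

Lemma Rn_homog n : Rn n \is n.-homog.
Proof.
rewrite /Rn; apply: rpred_sum => j _; apply: rpredZ.
rewrite dhomogX; change (mdeg (mono2 j (n - j)) == n).
by rewrite mdeg_mono2 subnKC // -ltnS.
Qed.

Lemma msize_homog d (p : R) : p != 0 -> p \is d.-homog -> msize p = d.+1.
Proof.
move=> pnz /dhomogP H.
by rewrite -mlead_deg // H // mlead_supp.
Qed.

Lemma form_neq0 d (C : P2) : (size C <= d.+1)%N -> C != 0 -> form d C != 0.
Proof.
move=> sC Cnz; apply/eqP => H0.
have Hl : ((size C).-1 < d.+1)%N by move: sC; rewrite -size_poly_gt0 in Cnz; lia.
have := form_coef d C (d - (size C).-1) (size C).-1.
rewrite H0 mcoeff0 subnK; last by lia.
rewrite eqxx => /esym /eqP; rewrite -lead_coefE lead_coef_eq0.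
by move/eqP => C0; move: Cnz; rewrite C0 eqxx.
Qed.

Lemma tdeg_form d (C : P2) : (size C <= d.+1)%N -> C != 0 -> tdeg (form d C) = d.
Proof. by move=> sC Cnz; rewrite /tdeg (msize_homog (form_neq0 sC Cnz) (form_homog d C)). Qed.

Lemma Rn_neq0 n : Rn n != 0.
Proof.
apply/eqP => H; have := Rn_coef n 0 n; rewrite H mcoeff0 add0n eqxx r0.
by move/eqP; rewrite eq_sym oner_eq0.
Qed.

Lemma tdegM_Rn n : tdegM (Rn n) = n.
Proof. by rewrite /tdegM (msize_homog (Rn_neq0 n) (Rn_homog n)). Qed.

Lemma inL_form d (C : P2) : (size C <= d.+1)%N -> C`_0 = 1 -> inL (form d C).
Proof.
move=> sC C0.
have Cnz : C != 0 by apply/eqP => C0'; move: C0; rewrite C0' coef0 => /eqP; rewrite eq_sym oner_eq0.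
apply/and3P; split; first exact: form_neq0.
  by apply: homogE (form_homog d C).
by rewrite tdeg_form // form_coef addn0 eqxx C0.
Qed.

Definition coefs (theta : R) : P2 :=
  \poly_(j < (tdeg theta).+1) theta@_(mono2 (tdeg theta - j) j).

Lemma inL_formE theta : inL theta ->
  [/\ theta = form (tdeg theta) (coefs theta),
      (size (coefs theta) <= (tdeg theta).+1)%N & (coefs theta)`_0 = 1].
Proof.
move=> /and3P [tnz Hf /eqP H0].
have Hh : theta \is (tdeg theta).-homog by move: Hf; rewrite /is_form homog_msize.
split.
- apply/mpolyP => m; rewrite [m]mono2_ext form_coef.
  case: ifP => Hab.
    rewrite coef_poly (_ : (_ < _)%N); last by move/eqP: Hab; lia.
    congr (theta@_(mono2 _ _)); move/eqP: Hab; lia.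
  apply: (dhomog_nemf_coeff Hh); change (mdeg (mono2 (m ord0) (m o1)) != tdeg theta).
  by rewrite mdeg_mono2; exact/negbT.
- exact: size_poly.
- by rewrite coef_poly /= subn0.
Qed.

Lemma sum_pick K (V : nmodType) (F : 'I_K -> V) i0 (Hi0 : (i0 < K)%N) :
  (forall i : 'I_K, val i != i0 -> F i = 0) -> \sum_(i < K) F i = F (Ordinal Hi0).
Proof.
move=> H; rewrite (bigD1 (Ordinal Hi0)) //= big1 ?addr0 //.
Qed.

Lemma form_supp d (C : P2) m : (form d C)@_m != 0 -> exists j : 'I_d.+1, m = mono2 (d - j) j.
Proof.
rewrite [m]mono2_ext form_coef; case: ifP => // /eqP H _.
have Hj : (m o1 < d.+1)%N by lia.
by exists (Ordinal Hj) => /=; congr mono2; lia.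
Qed.

Lemma Rn_supp n m : (Rn n)@_m != 0 -> exists i : 'I_n.+1, m = mono2 i (n - i).
Proof.
rewrite [m]mono2_ext Rn_coef; case: ifP => // /eqP H _.
have Hi : (m ord0 < n.+1)%N by lia.
by exists (Ordinal Hi) => /=; congr mono2; lia.
Qed.

Lemma inj_form d : injective (fun j : 'I_d.+1 => mono2 (d - j) j).
Proof. by move=> j1 j2 /mono2_inj [_ H]; apply: val_inj. Qed.

Lemma inj_Rn n : injective (fun i : 'I_n.+1 => mono2 i (n - i)).
Proof. by move=> j1 j2 /mono2_inj [H _]; apply: val_inj. Qed.

Lemma mcoeffZX (c : 'F_2) (m w : 'X_{1..2}) : (c *: ('X_[m] : R))@_w = c * (m == w)%:R.
Proof. by rewrite mcoeffZ mcoeffX. Qed.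

Lemma contract_coef d (C : P2) n b c :
  (contract (form d C) (Rn n))@_(mono2 b c) =
     if (b + c + d == n)%N then lin d C (b + d) else 0.
Proof.
have E : (contract (form d C) (Rn n))@_(mono2 b c) =
   \sum_(p <- msupp (form d C)) \sum_(u <- msupp (Rn n))
     (if (p <= u)%MM then (form d C)@_p * (Rn n)@_u * ((u - p)%MM == mono2 b c)%:R else 0).
  rewrite /contract raddf_sum; apply: eq_bigr => p _; rewrite raddf_sum big_mkcond.
  apply: eq_bigr => u _; case: ifP => _ //.
  exact: mcoeffZX.
rewrite E (sum_msupp (@inj_form d) (@form_supp d C)); last first.
  by move=> m H0; apply: big1 => u _; rewrite H0 !mul0r; case: ifP.
under eq_bigr => j _.
  rewrite (sum_msupp (@inj_Rn n) (@Rn_supp n)); last first.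
    by move=> m H0; case: ifP => _ //; rewrite H0 mulr0 mul0r.
  have Hj : (j <= d)%N by rewrite -ltnS.
  under eq_bigr => i _.
    have Hi : (i <= n)%N by rewrite -ltnS.
    rewrite lem_mono2 sub_mono2 eq_mono2 form_coef Rn_coef (subnK Hj) (subnKC Hi) !eqxx.
    over.
  over.
rewrite /=.
case: ifP => Hn.
  rewrite /lin; apply: eq_bigr => j _.
  have Hi0 : (b + d - j < n.+1)%N by move/eqP: Hn; have := ltn_ord j; lia.
  rewrite (sum_pick Hi0) /=.
    have -> : ((d - j <= b + d - j)%N && (j <= n - (b + d - j))%N) = true.
      by apply/andP; split; move/eqP: Hn; have := ltn_ord j; lia.
    have -> : ((b + d - j - (d - j))%N == b) && ((n - (b + d - j) - j)%N == c) = true.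
      by apply/andP; split; apply/eqP; move/eqP: Hn; have := ltn_ord j; lia.
    by rewrite mulr1.
  move=> i Hi; case: ifP => // /andP [h1 h2].
  case: andP => [[/eqP e1 /eqP e2]|]; last by rewrite mulr0.
  by exfalso; move/negP: Hi; apply; apply/eqP; move: h1 h2 e1 e2; have := ltn_ord j; lia.
apply: big1 => j _; apply: big1 => i _; case: ifP => // /andP [h1 h2].
case: andP => [[/eqP e1 /eqP e2]|]; last by rewrite mulr0.
exfalso; move/negbT: Hn => /eqP; apply; move: h1 h2 e1 e2; have := ltn_ord j; have := ltn_ord i; lia.
Qed.

Lemma inIn n phi : (phi \in In n) = (contract phi (Rn n) == 0).
Proof. by []. Qed.

Lemma ann_form n d (C : P2) :
  (form d C \in In n) <-> (forall a, (d <= a <= n)%N -> lin d C a = 0).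
Proof.
rewrite inIn; split.
  move/eqP => H a /andP [h1 h2].
  have := contract_coef d C n (a - d) (n - a).
  rewrite H mcoeff0 (_ : (a - d + (n - a) + d == n)%N); last by apply/eqP; lia.
  by rewrite subnK // => ->.
move=> H; apply/eqP/mpolyP => m; rewrite [m]mono2_ext contract_coef mcoeff0.
case: ifP => // /eqP Hm; apply: H; apply/andP; split; lia.
Qed.

Lemma Delta_form d (C : P2) m : (size C <= d.+1)%N -> C != 0 -> (d <= m)%N ->
  Delta (form d C) (Rn m) = lin d C m.
Proof.
move=> sC Cnz dm.
rewrite /Delta tdeg_form // tdegM_Rn dm.
rewrite (sum_msupp (@inj_form d) (@form_supp d C)); last first.
  by move=> p H0; apply: big1 => u _; rewrite H0 mul0r.
rewrite /lin; apply: eq_bigr => j _.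
rewrite big_mkcond (sum_msupp (@inj_Rn m) (@Rn_supp m)); last first.
  by move=> u H0; case: ifP => _ //; rewrite H0 mulr0.
have Hj : (j <= d)%N by rewrite -ltnS.
have Hi0 : (m - j < m.+1)%N by lia.
rewrite (sum_pick Hi0) /=.
  rewrite ex_mono2 ez_mono2 ex_mono2 ez_mono2 form_coef Rn_coef (subnK Hj) eqxx.
  rewrite (subnKC (leq_subr _ _)) eqxx.
  rewrite (_ : ((j : nat) == m - (m - j))%N); last by apply/eqP; lia.
  rewrite (_ : (Posz (d - j) - Posz (m - j) == Posz d - Posz m)); last by apply/eqP; lia.
  by [].
move=> i Hi; rewrite ez_mono2 ez_mono2; case: ifP => // /andP [/eqP e1 _].
by exfalso; move/negP: Hi; apply; apply/eqP; have := ltn_ord i; lia.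
Qed.

Lemma mono2_00 : mono2 0 0 = 0%MM.
Proof. by apply/mnmP => i; rewrite mnm0E; case: (I2_cases i) => ->. Qed.

Lemma xE : x = 'X_[mono2 1 0].
Proof. by rewrite /x; congr 'X_[_]; apply/mnmP => i; rewrite mnm1E; case: (I2_cases i) => ->. Qed.

Lemma zE : z = 'X_[mono2 0 1].
Proof. by rewrite /z; congr 'X_[_]; apply/mnmP => i; rewrite mnm1E; case: (I2_cases i) => ->. Qed.

Lemma formD d (C D : P2) : form d (C + D) = form d C + form d D.
Proof. by rewrite /form -big_split; apply: eq_bigr => j _; rewrite coefD scalerDl. Qed.

Lemma form01 : form 0 1 = 1.
Proof. by rewrite /form big_ord1 /= coefC /= scale1r mono2_00 mpolyX0. Qed.

Lemma form_x d (C : P2) : (size C <= d.+1)%N -> x * form d C = form d.+1 C.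
Proof.
move=> sC; rewrite /form [RHS]big_ord_recr /= (leq_sizeP _ _ sC) // scale0r addr0.
rewrite mulr_sumr; apply: eq_bigr => j _.
rewrite -scalerAr xE -mpolyXD add_mono2; congr (_ *: 'X_[mono2 _ _]).
have := ltn_ord j; lia.
Qed.

Lemma form_z d (C : P2) : z * form d C = form d.+1 ('X * C).
Proof.
rewrite /form [RHS]big_ord_recl /= coefXM eqxx scale0r add0r.
rewrite mulr_sumr; apply: eq_bigr => j _.
rewrite -scalerAr zE -mpolyXD add_mono2 coefXM /= /bump /=.
by rewrite add1n add0n subSS.
Qed.

Arguments Fs : simpl never.
Arguments Ps : simpl never.

Lemma fgS n : fg n.+1 =
  (let f := (fg n).1 in let g := (fg n).2 in
   let d : int := (tdeg g)%:Z - (tdeg f)%:Z in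
   if Delta f (Rn n.+1) == 0 then (f, z * g)
   else if d <= 0 then (f + x ^+ `|d|%N * g, z * g)
   else (x ^+ `|d|%N * f + g, z * f)).
Proof. by []. Qed.

Lemma sizeXF k : (size (('X : P2) * Fs k)%R <= k.+2)%N.
Proof.
have [s _ _ _] := Fs_props k.
apply/leq_sizeP => i Hi; rewrite coefXM; case: ifP => // _.
apply: (leq_sizeP _ _ s); move: Hi; clear; lia.
Qed.

Lemma XF_neq0 k : ('X : P2) * Fs k != 0.
Proof.
by rewrite mulf_eq0 negb_or polyX_eq0 -size_poly_eq0 size_Fs.
Qed.

Lemma fg_odd k : fg (k.*2) = (form k.+1 (Fs k.+1), form k.+1 ('X * Fs k)) ->
    fg (k.*2.+1) = (form k.+1 (Fs k.+1), form k.+2 ('X^2 * Fs k)).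
Proof.
have [s1 _ _ _] := Fs_props k.+1.
have F1nz : Fs k.+1 != 0 by rewrite -size_poly_eq0 size_Fs.
move=> IH; rewrite fgS IH /=.
rewrite Delta_form //; last by lia.
rewrite lin_F; last by apply/andP; split; lia.
rewrite (_ : (k.*2.+1 == k.*2.+2) = false); last by apply/negbTE; lia.
by rewrite eqxx form_z mulrA -expr2.
Qed.

Lemma fg_eq k : fg (k.*2) = (form k.+1 (Fs k.+1), form k.+1 ('X * Fs k)) /\
  fg (k.*2.+1) = (form k.+1 (Fs k.+1), form k.+2 ('X^2 * Fs k)).
Proof.
elim: k => [|k IH].
  have E0 : fg 0 = (form 1 (Fs 1), form 1 ('X * Fs 0)).
    have A : form 1 1 = x by rewrite -form_x ?size_poly1 // form01 mulr1.
    have B : form 1 'X = z by rewrite -[X in form 1 X]mulr1 -form_z form01 mulr1.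
    have -> : Fs 1 = 1 + 'X by [].
    have -> : Fs 0 = 1 by [].
    by rewrite /= ?mulr1 formD A B.
  by split => //; apply: fg_odd.
have [_ H1] := IH.
have [s1 _ _ _] := Fs_props k.+1.
have F1nz : Fs k.+1 != 0 by rewrite -size_poly_eq0 size_Fs.
have E : fg (k.+1).*2 = (form k.+2 (Fs k.+2), form k.+2 ('X * Fs k.+1)).
  rewrite (_ : (k.+1).*2 = (k.*2.+1).+1) // fgS H1 /=.
  rewrite Delta_form //; last by lia.
  rewrite lin_F; last by apply/andP; split; lia.
  rewrite eqxx.
  have sX2 : (size (('X^2 : P2) * Fs k)%R <= k.+3)%N.
    have [s _ _ _] := Fs_props k.
    apply/leq_sizeP => i Hi; rewrite coefXnM; case: ifP => // _.
    apply: (leq_sizeP _ _ s); move: Hi; clear; lia.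
  have X2nz : ('X^2 : P2) * Fs k != 0.
    by rewrite mulf_eq0 negb_or expf_neq0 ?polyX_eq0 // -size_poly_eq0 size_Fs.
  rewrite !tdeg_form //.
  rewrite (_ : (Posz k.+2 - Posz k.+1) = 1); last by lia.
  by rewrite /= expr1 form_x // -formD -FsSS form_z.
by split => //; apply: fg_odd.
Qed.

Lemma half_cases n : n = (n./2).*2 /\ ~~ odd n \/ n = (n./2).*2.+1 /\ odd n.
Proof.
have := odd_double_half n; case: (odd n) => /= H; [right|left]; split => //;
  by rewrite -[LHS]H.
Qed.

Lemma fk_eq n : fk n = form (n./2).+1 (Fs (n./2).+1).
Proof.
rewrite /fk; have [s|s] := half_cases n; case: s => E _; rewrite E; have [A B] := fg_eq n./2.
  by rewrite doubleK A.
by rewrite -[(n./2).*2.+1]/((n./2).*2.+1) B /= uphalf_double.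
Qed.

Lemma gk_eq n : ~~ odd n -> gk n = form (n./2).+1 ('X * Fs (n./2)).
Proof.
move=> ev; rewrite /gk; have [[E _]|[_ o]] := half_cases n; last by rewrite o in ev.
by rewrite E; have [A _] := fg_eq n./2; rewrite doubleK A.
Qed.

Lemma fk_In n : fk n \in In n.
Proof.
rewrite fk_eq; apply/ann_form => a /andP [h1 h2].
have [[E _]|[E _]] := half_cases n;
  (rewrite lin_F; last by apply/andP; split; lia);
  by rewrite (_ : (a == _) = false) //; apply/negbTE; lia.
Qed.

Lemma fk_L n : inL (fk n).
Proof.
have [s _ z _] := Fs_props (n./2).+1.
by rewrite fk_eq; apply: inL_form.
Qed.

Lemma lower n theta : theta \in In n -> inL theta -> ((n./2).+1 <= tdeg theta)%N.
Proof.
move=> Hin HL; have [E sC C0] := inL_formE HL.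
rewrite E in Hin; move/ann_form: Hin => Hann.
rewrite leqNgt; apply/negP => Hlt.
have [Hd _] := classify sC C0 (ltnW Hlt) Hann.
by move: Hlt; rewrite Hd ltnn.
Qed.

Lemma fkgk_In n : ~~ odd n -> fk n + gk n \in In n.
Proof.
move=> ev; rewrite fk_eq gk_eq // -formD; apply/ann_form => a /andP [h1 h2].
have [[E _]|[_ o]] := half_cases n; last by rewrite o in ev.
rewrite linD lin_F; last by apply/andP; split; lia.
rewrite lin_XF; last by apply/andP; split; lia.
by rewrite (_ : (a == _) = false) ?addr0 //; apply/negbTE; lia.
Qed.

Lemma fkgk_L n : ~~ odd n -> inL (fk n + gk n).
Proof.
move=> ev; rewrite fk_eq gk_eq // -formD; apply: inL_form.
  apply: (leq_trans (size_polyD _ _)); rewrite geq_max sizeXF size_Fs leqnn //.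
have [_ _ z _] := Fs_props (n./2).+1.
by rewrite coefD z coefXM eqxx addr0.
Qed.

Theorem corollary4 (n : nat) (theta : {mpoly 'F_2[2]}) :
  inTheta n theta <->
  (if odd n then theta = fk n
   else theta = fk n \/ theta = (fk n + gk n)%R).
Proof.
split.
  move=> [Hin HL Hmin].
  have Hle := Hmin _ (fk_In n) (fk_L n).
  rewrite fk_eq tdeg_form in Hle; last first.
  - by rewrite -size_poly_eq0 size_Fs.
  - by rewrite size_Fs.
  have [E sC C0] := inL_formE HL.
  rewrite E in Hin; move/ann_form: Hin => Hann.
  have [Hd HC] := classify sC C0 Hle Hann.
  rewrite E Hd.
  case: HC => [->|[ev ->]].
    by case: (odd n); [rewrite fk_eq | left; rewrite fk_eq].
  by rewrite (negbTE ev); right; rewrite formD fk_eq gk_eq.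
move=> H.
have Hmin : forall th, th \in In n -> inL th -> forall t', t' \in In n -> inL t' ->
    tdeg th = (n./2).+1 -> (tdeg th <= tdeg t')%N.
  by move=> th _ _ t' h1 h2 ->; apply: lower.
have tf : tdeg (fk n) = (n./2).+1.
  by rewrite fk_eq tdeg_form // ?size_Fs // -size_poly_eq0 size_Fs.
case ev: (odd n) in H.
  by rewrite H; split; [exact: fk_In|exact: fk_L|move=> t' h1 h2; rewrite tf; apply: lower].
case: H => ->.
  by split; [exact: fk_In|exact: fk_L|move=> t' h1 h2; rewrite tf; apply: lower].
have ev' : ~~ odd n by rewrite ev.
split; [exact: fkgk_In|exact: fkgk_L|move=> t' h1 h2].
rewrite fk_eq gk_eq // -formD tdeg_form; first exact: lower.
  apply: (leq_trans (size_polyD _ _)); rewrite geq_max sizeXF size_Fs leqnn //.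
have [_ _ z0 _] := Fs_props (n./2).+1.
apply/eqP => H0; have := congr1 (fun p : P2 => p`_0) H0.
by rewrite /= coefD z0 coefXM eqxx addr0 coef0 => /eqP; rewrite oner_eq0.
Qed.
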